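(* Let $X$ be a compact Hausdorff space, $\mathcal{A}$ a unital $C^*$-algebra with unit $1$, and $\mathcal{E}$ a $*$-subalgebra of $C(X,\mathcal{A})$. Then the constant function $1_X\equiv 1$ belongs to the uniform closure $\bar{\mathcal{E}}$ of $\mathcal{E}$ iff for every $x\in X$ there is $f\in\mathcal{E}$ such that $f(x)$ is invertible in $\mathcal{A}$.
   Context: $C(X,\mathcal{A})$ is the $C^*$-algebra of continuous maps $X\to\mathcal{A}$ with pointwise operations and supremum norm. *)

(* Defs.v *)
From HB Require Import structures.
From mathcomp Require Import all_boot all_order all_algebra.
From mathcomp Require Import all_classical all_reals all_analysis.
From mathcomp Require Import complex.
Set Implicit Arguments. Unset Strict Implicit. Unset Printing Implicit Defensive.
Import Order.TTheory GRing.Theory Num.Theory ComplexField.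
Import numFieldNormedType.Exports.
Local Open Scope ring_scope.
Local Open Scope classical_set_scope.

(* A unital C*-algebra structure on a complex Banach space
   A : completeNormedModType R[i] (vector space operations, norm, completeness
   and the norm topology come from A).  The record adds a bilinear,
   associative product with unit [one], submultiplicative norm, and an
   involution [star] which is additive, conjugate-linear,
   anti-multiplicative and satisfies the C*-identity.  (Hierarchy-Builder
   cannot join MathComp's normed-module and ring hierarchies, hence the
   explicit record.) *)
Record unital_Cstar_algebra (R : realType) (A : completeNormedModType R[i]) :=
  UnitalCstarAlgebra {
  amul : A -> A -> A;
  aone : A;
  astar : A -> A;
  mulA : forall x y z, amul x (amul y z) = amul (amul x y) z;
  mul1x : forall x, amul aone x = x;
  mulx1 : forall x, amul x aone = x;
  mulDl : forall x y z, amul (x + y) z = amul x z + amul y z;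
  mulDr : forall x y z, amul x (y + z) = amul x y + amul x z;
  mulZl : forall (a : R[i]) x y, amul (a *: x) y = a *: amul x y;
  mulZr : forall (a : R[i]) x y, amul x (a *: y) = a *: amul x y;
  normM_le : forall x y, `|amul x y| <= `|x| * `|y|;
  starK : forall x, astar (astar x) = x;
  starD : forall x y, astar (x + y) = astar x + astar y;
  starZ : forall (a : R[i]) x, astar (a *: x) = a^* *: astar x;
  starM : forall x y, astar (amul x y) = amul (astar y) (astar x);
  Cstar_identity : forall x, `|amul (astar x) x| = `|x| ^+ 2
}.

Section Defs.
Context (R : realType) (X : topologicalType) (A : completeNormedModType R[i])
        (CA : unital_Cstar_algebra A).

Definition invertible (x : A) : Prop :=
  exists y, amul CA x y = aone CA /\ amul CA y x = aone CA.

Definition star_subalgebra_CXA (E : set (X -> A)) : Prop :=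
  (forall f, E f -> continuous f) /\
  E (fun _ => 0) /\
  (forall f g, E f -> E g -> E (fun x => f x + g x)) /\
  (forall (a : R[i]) f, E f -> E (fun x => a *: f x)) /\
  (forall f g, E f -> E g -> E (fun x => amul CA (f x) (g x))) /\
  (forall f, E f -> E (fun x => astar CA (f x))).

Definition uniform_closure (E : set (X -> A)) (g : X -> A) : Prop :=
  forall e : R[i], 0 < e -> exists2 f, E f & forall x, `|g x - f x| < e.

End Defs.

(* Main.v *)
Require Import Defs.
From HB Require Import structures.
From mathcomp Require Import all_boot all_order all_algebra.
From mathcomp Require Import all_classical all_reals all_analysis.
From mathcomp Require Import complex ring lra.
Import Order.TTheory GRing.Theory Num.Theory ComplexField.
Import numFieldNormedType.Exports.
Local Open Scope ring_scope.
Local Open Scope classical_set_scope.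
Section Alg.
Context {R : realType} {A : completeNormedModType R[i]} {CA : unital_Cstar_algebra A}.
Local Notation mul := (amul CA).
Local Notation one := (aone CA).
Local Notation st := (astar CA).

Lemma mul0x x : mul 0 x = 0.
Proof. by have h := mulDl CA 0 0 x; rewrite addr0 in h; apply/(addrI (mul 0 x)); rewrite addr0 -h. Qed.
Lemma mulx0 x : mul x 0 = 0.
Proof. by have h := mulDr CA x 0 0; rewrite addr0 in h; apply/(addrI (mul x 0)); rewrite addr0 -h. Qed.
Lemma mulNx x y : mul (- x) y = - mul x y.
Proof. by apply/eqP; rewrite -subr_eq0 opprK -mulDl addNr mul0x. Qed.
Lemma mulxN x y : mul x (- y) = - mul x y.
Proof. by apply/eqP; rewrite -subr_eq0 opprK -mulDr addNr mulx0. Qed.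
Lemma mulBx x y z : mul (x - y) z = mul x z - mul y z.
Proof. by rewrite mulDl mulNx. Qed.
Lemma mulxB x y z : mul x (y - z) = mul x y - mul x z.
Proof. by rewrite mulDr mulxN. Qed.
Lemma star0 : st 0 = 0.
Proof. by have h := starD CA 0 0; rewrite addr0 in h; apply/(addrI (st 0)); rewrite addr0 -h. Qed.
Lemma starN x : st (- x) = - st x.
Proof. by apply/eqP; rewrite -subr_eq0 opprK -starD addNr star0. Qed.
Lemma starB x y : st (x - y) = st x - st y.
Proof. by rewrite starD starN. Qed.
Lemma star1 : st one = one.
Proof.
transitivity (mul (st one) (st (st one))); first by rewrite starK mulx1.
by rewrite -starM mulx1 starK.
Qed.
Lemma norm_star_le x : `|x| <= `|st x|.
Proof.
have [->|nz] := eqVneq x 0; first by rewrite normr0.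
have h := Cstar_identity CA x.
have h2 := normM_le CA (st x) x.
rewrite h expr2 in h2.
have xp : 0 < `|x| by rewrite normr_gt0.
by rewrite -(ler_pM2r xp).
Qed.
Lemma norm_star x : `|st x| = `|x|.
Proof.
apply/eqP; rewrite eq_le norm_star_le andbT.
by rewrite -{2}(starK CA x) norm_star_le.
Qed.
Lemma norm_one : `|one| <= 1.
Proof.
have h := Cstar_identity CA one.
rewrite star1 mulx1 expr2 in h.
have [->|nz] := eqVneq `|one| 0; first by rewrite ler01.
have : `|one| = 1 by apply: (mulIf nz); rewrite mul1r.
by move=> ->.
Qed.
End Alg.
Section L2.
Context {R : realType} {A : completeNormedModType R[i]} {CA : unital_Cstar_algebra A}.
Local Notation mul := (amul CA).
Local Notation one := (aone CA).
Local Notation st := (astar CA).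

Lemma L2 r q : st r = r -> st q = q -> mul r q = mul q r ->
  `|mul r r| <= `|mul r r + mul q q|.
Proof.
move=> sr sq cq.
pose v := r + 'i *: q.
have sv : st v = r - 'i *: q by rewrite /v starD starZ sr sq conjCi scaleNr.
have vv : mul (st v) v = mul r r + mul q q.
  rewrite sv /v !(mulDl, mulDr, mulNx, mulZl, mulZr) cq.
  rewrite scalerA.
  have -> : 'i * 'i = -1 :> R[i] by rewrite -expr2 sqrCi.
  by rewrite scaleN1r opprK addrA addrK.
have hv : `|v| ^+ 2 = `|mul r r + mul q q| by rewrite -vv Cstar_identity.
have n2 : (2%:R : R[i]) != 0 by rewrite pnatr_eq0.
have rv : r = (2%:R)^-1 *: (v + st v).
  rewrite sv /v addrACA subrr addr0.
  have -> : r + r = (2%:R : R[i]) *: r by rewrite scaler_nat.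
  by rewrite scalerA mulVf ?scale1r.
have hr : `|r| <= `|v|.
  rewrite {1}rv normrZ.
  apply: (le_trans (ler_wpM2l (normr_ge0 _) (ler_normD _ _))).
  rewrite norm_star.
  have -> : `|v| + `|v| = 2%:R * `|v| by rewrite mulr2n mulrDl mul1r.
  by rewrite mulrA normfV normr_nat mulVf // mul1r.
apply: (le_trans (normM_le CA r r)); rewrite -hv expr2.
by apply: ler_pM => //.
Qed.
End L2.
Section RealSeq.
Context {R : realType}.
Fixpoint pr (n : nat) : R := if n is m.+1 then (1 + pr m ^+ 2) / 2 else 0.

Lemma pr_ge0 n : 0 <= pr n.
Proof. elim: n => [|n IH] /=; first by []. by apply: divr_ge0 => //; apply: addr_ge0 => //; apply: sqr_ge0. Qed.
Lemma pr_le1 n : pr n <= 1.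
Proof.
elim: n => [|n IH] /=; first by rewrite ler01.
have h0 := pr_ge0 n.
have : pr n ^+ 2 <= 1 by rewrite expr2; nra.
lra.
Qed.
Lemma pr_incr n : pr n <= pr n.+1.
Proof. rewrite /=. have := sqr_ge0 (pr n - 1). rewrite !expr2. nra. Qed.
Lemma pr_step n : pr n.+2 - pr n.+1 = (pr n.+1 - pr n) * (pr n.+1 + pr n) / 2.
Proof. rewrite [pr n.+2]/= [pr n.+1]/=. set a := pr n. by field. Qed.
Lemma pr_small (e : R) : 0 < e -> exists n, pr n.+1 - pr n < e.
Proof.
move=> e0; apply/not_existsP => /= H.
have H' : forall n, e <= pr n.+1 - pr n by move=> n; rewrite leNgt; apply/negP/H.
have lin : forall n, n%:R * e <= pr n.
  elim=> [|n IH]; first by rewrite mul0r.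
  have := H' n; rewrite -natr1 mulrDl mul1r; lra.
have ie : 0 <= e^-1 by rewrite invr_ge0 ltW.
have := archi_boundP ie.
set N := Num.Def.archi_bound _ => hN.
have := lin N; have := pr_le1 N.
have ee : e^-1 * e = 1 by rewrite mulVf // gt_eqF.
have : 1 < N%:R * e by nra.
lra.
Qed.
End RealSeq.
Section Ysec.
Context {R : realType} {A : completeNormedModType R[i]} {CA : unital_Cstar_algebra A}.
Local Notation mul := (amul CA).
Local Notation one := (aone CA).
Local Notation st := (astar CA).
Local Notation rc := (real_complex R).

Fixpoint Ysq (z : A) (n : nat) : A :=
  if n is m.+1 then (2%:R : R[i])^-1 *: (z + mul (Ysq z m) (Ysq z m)) else 0.

Definition P (n : nat) : R[i] := rc (pr n).
Lemma P_ge0 n : 0 <= P n.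
Proof. by rewrite /P ler0c pr_ge0. Qed.
Lemma rc_half : rc (2^-1) = (2%:R)^-1.
Proof. by rewrite (fmorphV (real_complex R)) (rmorph_nat (real_complex R)). Qed.
Lemma P_succ n : P n.+1 = (2%:R)^-1 * (1 + P n ^+ 2).
Proof. by rewrite /P /= -rc_half -rmorphXn -(rmorph1 rc) -rmorphD -rmorphM mulrC. Qed.
Lemma P_step n : P n.+2 - P n.+1 = (2%:R)^-1 * ((P n.+1 - P n) * (P n.+1 + P n)).
Proof.
rewrite /P -!rmorphB pr_step -rmorphD -rmorphM mulrC.
by rewrite -rc_half -rmorphM.
Qed.
Lemma P_incr n : P n <= P n.+1.
Proof. by rewrite /P lecR pr_incr. Qed.

Lemma half_conj : ((2%:R : R[i])^-1)^* = (2%:R)^-1.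
Proof. by rewrite conj_Creal // rpredV realn. Qed.

Lemma Ycomm z w : mul w z = mul z w -> forall n, mul w (Ysq z n) = mul (Ysq z n) w.
Proof.
move=> wz; elim=> [|n IH] /=; first by rewrite mulx0 mul0x.
rewrite mulZl mulZr mulDl mulDr wz; congr (_ *: (_ + _)).
by rewrite Defs.mulA IH -Defs.mulA IH Defs.mulA.
Qed.
Lemma Yz z n : mul z (Ysq z n) = mul (Ysq z n) z.
Proof. exact: Ycomm. Qed.
Lemma YY z n m : mul (Ysq z n) (Ysq z m) = mul (Ysq z m) (Ysq z n).
Proof. by apply: Ycomm; rewrite Yz. Qed.
Lemma Ystar z : st z = z -> forall n, st (Ysq z n) = Ysq z n.
Proof.
move=> sz; elim=> [|n IH] /=; first exact: star0.
by rewrite starZ half_conj starD starM IH sz.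
Qed.

Lemma half_ge0 : 0 <= (2%:R : R[i])^-1.
Proof. by rewrite invr_ge0 ler0n. Qed.
Lemma norm_half : `|(2%:R : R[i])^-1| = (2%:R)^-1.
Proof. by rewrite ger0_norm // half_ge0. Qed.

Lemma Ynorm z : `|z| <= 1 -> forall n, `|Ysq z n| <= P n.
Proof.
move=> z1; elim=> [|n IH] /=; first by rewrite normr0 /P /= rmorph0.
rewrite normrZ norm_half P_succ; apply: ler_wpM2l; first exact: half_ge0.
apply: (le_trans (ler_normD _ _)); apply: lerD => //.
apply: (le_trans (normM_le CA _ _)); rewrite expr2.
by apply: ler_pM => //.
Qed.

Lemma Ydiff z : `|z| <= 1 -> forall n, `|Ysq z n.+1 - Ysq z n| <= P n.+1 - P n.
Proof.
move=> z1; elim=> [|n IH].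
  rewrite subr0; have -> : P 0 = 0 by rewrite /P /= rmorph0.
  by rewrite subr0; apply: Ynorm.
have -> : Ysq z n.+2 - Ysq z n.+1 =
   (2%:R)^-1 *: mul (Ysq z n.+1 - Ysq z n) (Ysq z n.+1 + Ysq z n).
  set a := Ysq z n.+1; set b := Ysq z n.
  have ea : Ysq z n.+2 = (2%:R)^-1 *: (z + mul a a) by [].
  have eb : a = (2%:R)^-1 *: (z + mul b b) by [].
  rewrite ea {1}eb -scalerBr; congr (_ *: _).
  rewrite mulBx !mulDr (YY z n n.+1) -/a -/b.
  by rewrite !opprD !addrA addrK [z + _ - z]addrAC subrr add0r.
rewrite normrZ norm_half P_step; apply: ler_wpM2l; first exact: half_ge0.
apply: (le_trans (normM_le CA _ _)); apply: ler_pM => //.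
apply: (le_trans (ler_normD _ _)); apply: lerD; exact: Ynorm.
Qed.

Lemma Ysmall z : `|z| <= 1 -> forall e : R[i], 0 < e ->
  exists n, `|Ysq z n.+1 - Ysq z n| < e.
Proof.
move=> z1 e e0.
have er : e \is Num.real by apply: gtr0_real.
have [k ek] := complex_realP _ er.
move: e0; rewrite ek -[0](rmorph0 rc) ltcR => k0.
have [n hn] := pr_small k k0.
exists n; apply: (le_lt_trans (@Ydiff z z1 n)).
by rewrite /P -rmorphB ltcR.
Qed.

Lemma Rsq z n : mul (one - Ysq z n) (one - Ysq z n) =
   one - z + (2%:R : R[i]) *: (Ysq z n.+1 - Ysq z n).
Proof.
rewrite [Ysq z n.+1]/= scalerBr scalerA mulfV ?pnatr_eq0 // scale1r.
rewrite mulBx !mulxB mul1x mulx1.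
rewrite scaler_nat mulr2n. 
set Y := Ysq z n; set M := mul Y Y.
by rewrite mul1x opprB opprD !addrA subrK [one - Y + M]addrAC.
Qed.
End Ysec.
Arguments Ysq {R A} CA z n.
Section Pos.
Context {R : realType} {A : completeNormedModType R[i]} {CA : unital_Cstar_algebra A}.
Local Notation mul := (amul CA).
Local Notation one := (aone CA).
Local Notation st := (astar CA).

Lemma POSn z q n : st z = z -> `|z| <= 1 -> st q = q -> mul q z = mul z q ->
  `|one - z| <= `|one - z + mul q q| + 4%:R * `|Ysq CA z n.+1 - Ysq CA z n|.
Proof.
move=> sz z1 sq qz.
set d := Ysq CA z n.+1 - Ysq CA z n.
have sr : st (one - Ysq CA z n) = one - Ysq CA z n by rewrite starB star1 Ystar.
have crq : mul (one - Ysq CA z n) q = mul q (one - Ysq CA z n).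
  by rewrite mulBx mulxB mul1x mulx1 (Ycomm _ _ qz).
have h := L2 _ _ sr sq crq.
rewrite Rsq -/d in h.
have e1 : one - z = (one - z + 2%:R *: d) - 2%:R *: d by rewrite addrK.
have nd : `|(2%:R : R[i]) *: d| = 2%:R * `|d| by rewrite normrZ normr_nat.
rewrite {1}e1; apply: (le_trans (ler_normB _ _)); rewrite nd.
apply: (le_trans (lerD h (lexx _))).
have e2 : one - z + 2%:R *: d + mul q q = (one - z + mul q q) + 2%:R *: d.
  by rewrite addrAC.
rewrite e2; apply: (le_trans (lerD (ler_normD _ _) (lexx _))); rewrite nd.
rewrite -addrA lerD2l -mulrDl -natrD.
done.
Qed.

Lemma closeP (x y : R[i]) (err : nat -> R[i]) :
  (forall e, 0 < e -> exists n, err n < e) ->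
  (forall n, x <= y + err n) -> x <= y.
Proof.
move=> he hx; apply/ler_addgt0Pr => e e0.
have [n hn] := he e e0.
by apply: (le_trans (hx n)); rewrite lerD2l ltW.
Qed.

Lemma Ysmall4 z : `|z| <= 1 -> forall e : R[i], 0 < e ->
  exists n, 4%:R * `|Ysq CA z n.+1 - Ysq CA z n| < e.
Proof.
move=> z1 e e0.
have e4 : 0 < e / 4%:R by rewrite divr_gt0 // ltr0n.
have [n hn] := Ysmall (CA:=CA) _ z1 _ e4.
exists n; rewrite mulrC -ltr_pdivlMr ?ltr0n //.
Qed.

Lemma A1 s : st s = s -> `|s| <= 1 -> `|one - mul s s| <= 1.
Proof.
move=> ss s1.
have sz : st (mul s s) = mul s s by rewrite starM ss.
have z1 : `|mul s s| <= 1.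
  apply: (le_trans (normM_le CA s s)).
  by rewrite -[1](mulr1 1); apply: ler_pM.
have qz : mul s (mul s s) = mul (mul s s) s by rewrite Defs.mulA.
apply: (closeP _ _ (fun n => 4%:R * `|Ysq CA (mul s s) n.+1 - Ysq CA (mul s s) n|) (Ysmall4 _ z1)) => n.
apply: (le_trans (POSn _ _ n sz z1 ss qz)).
by rewrite subrK lerD2r norm_one.
Qed.
End Pos.
Section A2sec.
Context {R : realType} {A : completeNormedModType R[i]} {CA : unital_Cstar_algebra A}.
Local Notation mul := (amul CA).
Local Notation one := (aone CA).
Local Notation st := (astar CA).

Lemma Psmall6 (e : R[i]) : 0 < e -> exists n, 6%:R * (P n.+1 - P n) < e.
Proof.
move=> e0.
have e6 : 0 < e / 6%:R by rewrite divr_gt0 // ltr0n.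
have er : e / 6%:R \is Num.real by apply: gtr0_real.
have [k ek] := complex_realP _ er.
move: e6; rewrite ek -[0](rmorph0 (real_complex R)) ltcR => k0.
have [n hn] := pr_small k k0.
exists n; rewrite mulrC -ltr_pdivlMr ?ltr0n // ek.
by rewrite /P -rmorphB ltcR.
Qed.

Lemma A2 s b (c : R[i]) : st s = s -> `|s| <= 1 -> mul s b = one -> mul b s = one ->
  `|b| <= c -> 1 <= c -> `|one - mul s s| <= 1 - c^-1 * c^-1.
Proof.
move=> ss s1 sb1 bs1 bc c1.
have c0 : 0 < c by apply: lt_le_trans c1.
have cr : (c^-1)^* = c^-1 by apply: conj_Creal; rewrite rpredV gtr0_real.
have sb : st b = b.
  have h1 : mul (st b) s = one by rewrite -{1}ss -starM sb1 star1.
  by rewrite -[st b](mulx1 CA) -sb1 Defs.mulA h1 mul1x.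
pose t := c^-1 *: b.
have st_t : st t = t by rewrite /t starZ cr sb.
pose z' := mul t t.
have sz' : st z' = z' by rewrite /z' starM st_t.
have ic0 : 0 <= c^-1 by rewrite invr_ge0 ltW.
have t1 : `|t| <= 1.
  rewrite /t normrZ ger0_norm //.
  have := ler_wpM2l ic0 bc; rewrite mulVf ?gt_eqF //.
have z'1 : `|z'| <= 1.
  apply: (le_trans (normM_le CA t t)).
  by rewrite -[1](mulr1 1); apply: ler_pM.
have sbb : mul s (mul b b) = b by rewrite Defs.mulA sb1 mul1x.
have bbs : mul (mul b b) s = b by rewrite -Defs.mulA bs1 mulx1.
have cs : mul s z' = mul z' s.
  by rewrite /z' /t !(mulZl, mulZr) sbb bbs.
have ssz : mul (mul s s) z' = (c^-1 * c^-1) *: one.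
  rewrite /z' /t !(mulZl, mulZr) -Defs.mulA sbb sb1 scalerA; congr (_ *: _).
apply: (closeP _ _ (fun n => 6%:R * (P n.+1 - P n)) Psmall6) => n.
set rho := one - Ysq CA z' n.
have srho : st rho = rho by rewrite /rho starB star1 Ystar.
have crho : mul s rho = mul rho s by rewrite /rho mulBx mulxB mul1x mulx1 (Ycomm _ _ cs).
pose q := mul s rho.
have sq : st q = q by rewrite /q starM srho ss crho.
have qz : mul q (mul s s) = mul (mul s s) q.
  rewrite /q -!Defs.mulA; congr (mul s _).
  by rewrite Defs.mulA -crho -Defs.mulA -crho.
have qq : mul q q = mul (mul s s) (mul rho rho).
  rewrite /q -!Defs.mulA; congr (mul s _).
  by rewrite Defs.mulA -crho -Defs.mulA.
have sss : st (mul s s) = mul s s by rewrite starM ss.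
have ss1 : `|mul s s| <= 1.
  apply: (le_trans (normM_le CA s s)).
  by rewrite -[1](mulr1 1); apply: ler_pM.
have H := POSn _ _ n sss ss1 sq qz.
rewrite qq /rho Rsq in H.
set d' := Ysq CA z' n.+1 - Ysq CA z' n in H.
set d := Ysq CA (mul s s) n.+1 - Ysq CA (mul s s) n in H.
have E : forall w, one - mul s s + mul (mul s s) (one - z' + 2%:R *: w) =
   (1 - c^-1 * c^-1) *: one + 2%:R *: mul (mul s s) w.
  move=> w; rewrite !mulDr mulxN mulx1 ssz mulZr scalerBl scale1r.
  by rewrite !addrA subrK.
rewrite E in H.
have k1 : 0 <= 1 - c^-1 * c^-1.
  have ci1 : c^-1 <= 1 by rewrite invf_le1.
  by rewrite subr_ge0 -[1](mulr1 1); apply: ler_pM.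
have hd' : `|d'| <= P n.+1 - P n by apply: Ydiff.
have hd : `|d| <= P n.+1 - P n by apply: Ydiff.
apply: (le_trans H).
have -> : (6%:R : R[i]) * (P n.+1 - P n) = 2%:R * (P n.+1 - P n) + 4%:R * (P n.+1 - P n).
  by rewrite -mulrDl -natrD.
rewrite addrA; apply: lerD; last by apply: ler_wpM2l => //; rewrite ler0n.
apply: (le_trans (ler_normD _ _)); apply: lerD.
  rewrite normrZ ger0_norm //; rewrite -{2}[1 - _]mulr1; apply: ler_wpM2l => //.
  exact: norm_one.
rewrite normrZ normr_nat; apply: ler_wpM2l; first by rewrite ler0n.
apply: (le_trans (normM_le CA _ _)); rewrite -[P n.+1 - P n]mul1r.
by apply: ler_pM.
Qed.
End A2sec.
Section RealHelp.
Context {R : realType}.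
Local Notation rc := (real_complex R).

Lemma pos_rc (x : R[i]) : 0 < x -> exists2 k : R, 0 < k & x = rc k.
Proof.
move=> x0.
have er : x \is Num.real by apply: gtr0_real.
have [k ek] := complex_realP _ er.
by exists k => //; move: x0; rewrite ek -[0](rmorph0 rc) ltcR.
Qed.
Lemma real_rc (x : R[i]) : 0 <= x -> exists2 k : R, 0 <= k & x = rc k.
Proof.
move=> x0.
have er : x \is Num.real by apply: ger0_real.
have [k ek] := complex_realP _ er.
by exists k => //; move: x0; rewrite ek -[0](rmorph0 rc) lecR.
Qed.

Lemma pow_smallR (q e : R) : 0 <= q -> q < 1 -> 0 < e -> exists N, q ^+ N < e.
Proof.
move=> q0 q1 e0.
have qn : `|q| < 1 by rewrite ger0_norm.
have h := @cvg_expr R q qn.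
have /cvgrPdist_lt h2 := h.
have [N _ HN] := h2 e e0.
by exists N; have := HN N (leqnn N); rewrite /= sub0r normrN ger0_norm // exprn_ge0.
Qed.

Lemma pow_small (q e : R[i]) : 0 <= q -> q < 1 -> 0 < e -> exists N, q ^+ N < e.
Proof.
move=> q0 q1 e0.
have [k k0 ->] := pos_rc _ e0.
have [r r0 qr] := real_rc _ q0.
move: q1; rewrite qr -(rmorph1 rc) ltcR => r1.
have [N HN] := pow_smallR _ _ r0 r1 k0.
by exists N; rewrite -rmorphXn ltcR.
Qed.

Lemma inv_small (d : R[i]) : 0 < d -> exists m : nat, (m.+1)%:R^-1 < d.
Proof.
move=> d0.
have ie : 0 <= d^-1 by rewrite invr_ge0 ltW.
have [k k0 dk] := pos_rc _ d0.
have ik : 0 <= k^-1 by rewrite invr_ge0 ltW.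
have hb := archi_boundP ik.
exists (Num.Def.archi_bound k^-1).
rewrite dk -(rmorph_nat rc) -(fmorphV rc) ltcR.
set N := Num.Def.archi_bound k^-1 in hb *.
have hb' : k^-1 < N.+1%:R by apply: (lt_le_trans hb); rewrite ler_nat.
have N0 : 0 < N.+1%:R :> R by rewrite ltr0n.
have e1 : k^-1 * k = 1 by rewrite mulVf // gt_eqF.
have e2 : (N.+1%:R)^-1 * N.+1%:R = 1 :> R by rewrite mulVf // gt_eqF.
have i0 : 0 < (N.+1%:R)^-1 :> R by rewrite invr_gt0.
have := hb'; rewrite -(ltr_pM2l (mulr_gt0 i0 k0)).
by rewrite -mulrA [k * _]mulrC e1 mulr1 mulrC mulrA [_ * N.+1%:R^-1]mulrC e2 mul1r.
Qed.
End RealHelp.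
Section Neu.
Context {R : realType} {A : completeNormedModType R[i]} {CA : unital_Cstar_algebra A}.
Local Notation mul := (amul CA).
Local Notation one := (aone CA).
Local Notation st := (astar CA).

Fixpoint pw (u : A) n := if n is m.+1 then mul u (pw u m) else one.
Fixpoint Sp (u : A) n := if n is m.+1 then Sp u m + pw u m else 0.
Fixpoint G (q : R[i]) n := if n is m.+1 then G q m + q ^+ m else 0.

Lemma pw_norm u n : `|pw u n| <= `|u| ^+ n.
Proof.
elim: n => [|n IH] /=; first by rewrite expr0 norm_one.
apply: (le_trans (normM_le CA _ _)); rewrite exprS.
by apply: ler_wpM2l.
Qed.
Lemma pw_comm u n : mul u (pw u n) = mul (pw u n) u.
Proof.
elim: n => [|n IH] /=; first by rewrite mulx1 mul1x.
by rewrite -Defs.mulA -IH.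
Qed.
Lemma mulSl u n : mul (one - u) (Sp u n) = one - pw u n.
Proof.
elim: n => [|n IH] /=; first by rewrite mulx0 subrr.
by rewrite mulDr IH mulBx mul1x addrA subrK.
Qed.
Lemma mulSr u n : mul (Sp u n) (one - u) = one - pw u n.
Proof.
elim: n => [|n IH] /=; first by rewrite mul0x subrr.
by rewrite mulDl IH mulxB mulx1 -pw_comm addrA subrK.
Qed.

Lemma G_ge0 q n : 0 <= q -> 0 <= G q n.
Proof. move=> q0; elim: n => [|n IH] //=; by rewrite addr_ge0 // exprn_ge0. Qed.
Lemma G_id q n : (1 - q) * G q n = 1 - q ^+ n.
Proof.
elim: n => [|n IH] /=; first by rewrite mulr0 expr0 subrr.
by rewrite mulrDr IH exprS mulrBl mul1r addrA subrK.
Qed.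
Lemma G_le q n : 0 <= q -> q < 1 -> G q n <= (1 - q)^-1.
Proof.
move=> q0 q1.
have p : 0 < 1 - q by rewrite subr_gt0.
rewrite -(ler_pM2l p) mulfV ?gt_eqF // G_id gerBl exprn_ge0 //.
Qed.

Lemma Sdiff u n j : `|Sp u (n + j) - Sp u n| <= `|u| ^+ n * G `|u| j.
Proof.
elim: j => [|j IH]; first by rewrite addn0 subrr normr0 /= mulr0.
rewrite addnS /= addrAC.
apply: (le_trans (ler_normD _ _)).
rewrite mulrDr -exprD; apply: lerD => //; exact: pw_norm.
Qed.

Lemma Scvg u : `|u| < 1 -> cvgn (Sp u).
Proof.
move=> u1.
apply: cauchy_cvg; apply/cauchy_ballP => e e0.
have p : 0 < 1 - `|u| by rewrite subr_gt0.
have [N HN] := pow_small _ _ (normr_ge0 u) u1 (mulr_gt0 e0 p).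
have key : forall m n, (N <= m)%N -> (N <= n)%N -> `|Sp u m - Sp u n| < e.
  suff H : forall m n, (N <= n)%N -> (n <= m)%N -> `|Sp u m - Sp u n| < e.
    move=> m n Nm Nn; have [nm|mn] := leqP n m; first exact: H.
    by rewrite distrC; apply: H => //; apply: ltnW.
  move=> m n Nn nm; rewrite -(subnKC nm).
  apply: (le_lt_trans (Sdiff _ _ _)).
  apply: (le_lt_trans (ler_wpM2l (exprn_ge0 _ (normr_ge0 _)) (G_le _ _ (normr_ge0 u) u1))).
  rewrite -(ltr_pM2r p) divfK ?gt_eqF //.
  apply: le_lt_trans HN.
  by apply: ler_wiXn2l => //; rewrite ltW.
exists ([set x | exists2 n, (N <= n)%N & x = Sp u n],
        [set x | exists2 n, (N <= n)%N & x = Sp u n]).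
  by split; exists N => // n /= Nn; exists n.
move=> [x y] /= [[m Nm ->] [n Nn ->]].
by rewrite -ball_normE /ball_ /=; apply: key.
Qed.

Lemma zero_le (x : A) : (forall e : R[i], 0 < e -> `|x| <= e) -> x = 0.
Proof.
move=> h; apply/normr0_eq0/eqP; rewrite eq_le normr_ge0 andbT.
by apply/ler_addgt0Pr => e e0; rewrite add0r; apply: h.
Qed.

Lemma neumann a : `|one - a| < 1 -> invertible CA a.
Proof.
move=> a1.
set u := one - a.
have au : a = one - u by rewrite /u opprB addrC subrK.
have cv := Scvg u a1.
set l := limn (Sp u).
have nearl : forall e : R[i], 0 < e -> exists N, forall n, (N <= n)%N -> `|l - Sp u n| < e.
  move=> e e0; have /cvgrPdist_lt h := cv.
  by have [N _ HN] := h e e0; exists N => n Nn; apply: HN.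
have nearp : forall e : R[i], 0 < e -> exists N, forall n, (N <= n)%N -> `|pw u n| < e.
  move=> e e0; have [N HN] := pow_small _ _ (normr_ge0 u) a1 e0.
  exists N => n Nn; apply: (le_lt_trans (pw_norm _ _)); apply: le_lt_trans HN.
  by apply: ler_wiXn2l => //; rewrite ltW.
have key : forall e : R[i], 0 < e -> exists n, `|a| * `|l - Sp u n| + `|pw u n| <= e.
  move=> e e0.
  have e2 : 0 < e / 2%:R by rewrite divr_gt0 // ltr0n.
  have a0 : 0 < `|a| + 1 by rewrite ltr_wpDl.
  have [N1 H1] := nearl _ (divr_gt0 e2 a0).
  have [N2 H2] := nearp _ e2.
  exists (maxn N1 N2).
  have h1 := H1 (maxn N1 N2) (leq_maxl _ _).
  have h2 := H2 (maxn N1 N2) (leq_maxr _ _).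
  rewrite [e](splitr e); apply: lerD; last exact: ltW.
  have : `|a| * `|l - Sp u (maxn N1 N2)| <= (`|a| + 1) * (e / 2%:R / (`|a| + 1)).
    apply: ler_pM => //; first by rewrite lerDl.
    exact: ltW.
  by rewrite [(`|a| + 1) * _]mulrC divfK ?gt_eqF.
exists l; split.
- apply/eqP; rewrite -subr_eq0; apply/eqP/zero_le => e e0.
  have [n hn] := key e e0; apply: le_trans hn.
  have -> : mul a l - one = mul a (l - Sp u n) - pw u n.
    have mS : mul a (Sp u n) = one - pw u n by rewrite au mulSl.
    by rewrite mulxB mS opprB -addrA [pw u n - one - pw u n]addrAC subrr add0r.
  apply: (le_trans (ler_normB _ _)); apply: lerD => //.
  exact: normM_le.
- apply/eqP; rewrite -subr_eq0; apply/eqP/zero_le => e e0.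
  have [n hn] := key e e0; apply: le_trans hn.
  have -> : mul l a - one = mul (l - Sp u n) a - pw u n.
    have mS : mul (Sp u n) a = one - pw u n by rewrite au mulSr.
    by rewrite mulBx mS opprB -addrA [pw u n - one - pw u n]addrAC subrr add0r.
  apply: (le_trans (ler_normB _ _)); apply: lerD => //.
  by apply: (le_trans (normM_le CA _ _)); rewrite mulrC.
Qed.
End Neu.
Section PX.
Context (X : topologicalType) (x0 : X).
Definition pX : Type := X.
HB.instance Definition _ := Topological.on pX.
HB.instance Definition _ := isPointed.Build pX x0.
Lemma pX_cover : compact [set: X] -> cover_compact [set: pX].
Proof. move=> c; rewrite -compact_cover; exact: c. Qed.
End PX.
Section Top.
Context {R : realType} {A : completeNormedModType R[i]} {CA : unital_Cstar_algebra A}.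
Local Notation mul := (amul CA).
Local Notation one := (aone CA).
Local Notation st := (astar CA).

Lemma cover_lemma (X : topologicalType) (I : choiceType) (U : I -> set X) :
  compact [set: X] -> (forall i, open (U i)) -> (forall y, exists i, U i y) ->
  exists l : seq I, forall y, exists2 i, i \in l & U i y.
Proof.
move=> cpt0 oU cov.
have [[x0 _]|X0] := pselect (exists x : X, True); last first.
  by exists [::] => y; exfalso; apply: X0; exists y.
have cpt := pX_cover X x0 cpt0.
have [D' _ hD] := cpt I setT U (fun i _ => oU i) (fun y _ => let: ex_intro i h := cov y in ex_intro2 _ _ i Logic.I h).
exists (finmap.enum_fset D') => y; have [i Di Ui] := hD y Logic.I.
by exists i.
Qed.

Lemma sum_ge (T : eqType) (l : seq T) (F : T -> R[i]) i :
  (forall j, 0 <= F j) -> i \in l -> F i <= \sum_(j <- l) F j.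
Proof.
move=> F0; elim: l => [|a l IH] //=.
rewrite in_cons big_cons => /orP [/eqP ->|il].
  by rewrite lerDl sumr_ge0.
by apply: (le_trans (IH il)); rewrite lerDr.
Qed.

Lemma bounded_fun (X : topologicalType) (phi : X -> A) :
  compact [set: X] -> continuous phi -> exists2 M, 0 <= M & forall y, `|phi y| <= M.
Proof.
move=> cpt cphi.
have oU : forall x, open (phi @^-1` ball (phi x) 1).
  by move=> x; move/continuousP: cphi; apply; exact: ball_open.
have cov : forall y, exists x, (phi @^-1` ball (phi x) 1) y.
  by move=> y; exists y; apply: ballxx.
have [l hl] := cover_lemma _ _ _ cpt oU cov.
exists (\sum_(x <- l) (`|phi x| + 1)); first by apply: sumr_ge0 => x _; apply: addr_ge0.
move=> y; have [x xl hx] := hl y.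
move: hx; rewrite /= -ball_normE /ball_ /= => hx.
have F0 : forall j, 0 <= `|phi j| + 1 by move=> j; apply: addr_ge0.
apply: (le_trans _ (sum_ge _ _ (fun x => `|phi x| + 1) x F0 xl)).
have -> : phi y = phi x - (phi x - phi y) by rewrite opprB addrC subrK.
by apply: (le_trans (ler_normB _ _)); apply: lerD => //; apply: ltW.
Qed.
End Top.
Section Main.
Context {R : realType} {A : completeNormedModType R[i]} {CA : unital_Cstar_algebra A}.
Context (X : topologicalType).
Local Notation mul := (amul CA).
Local Notation one := (aone CA).
Local Notation st := (astar CA).

Fixpoint cmb (fs : seq (X -> A)) : X -> A :=
  if fs is f :: fs' then (fun y => f y + cmb fs' y - mul (f y) (cmb fs' y))
  else (fun _ => 0).

Lemma cmb_in (E : set (X -> A)) : star_subalgebra_CXA CA E ->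
  forall fs, (forall f, List.In f fs -> E f) -> E (cmb fs).
Proof.
move=> HE; case: HE => _ [E0 [Eadd [Escal [Emul _]]]].

elim=> [|f fs IH] hf /=; first exact: E0.
have Ef : E f by apply: hf; left.
have Eg : E (cmb fs) by apply: IH => g hg; apply: hf; right.
have -> : (fun y => f y + cmb fs y - mul (f y) (cmb fs y)) =
   (fun y => (f y + cmb fs y) + (-1) *: mul (f y) (cmb fs y)).
  by apply: funext => y; rewrite scaleN1r.
apply: (Eadd _ _ (Eadd _ _ Ef Eg)).
exact: (Escal _ _ (Emul _ _ Ef Eg)).
Qed.

Lemma cmb_cons f fs y : one - cmb (f :: fs) y = mul (one - f y) (one - cmb fs y).
Proof.
rewrite /= mulBx !mulxB mul1x mulx1 !opprB.
set a := f y; set b := cmb fs y; set c := mul a b.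
rewrite opprD !addrA.
by rewrite mul1x addrAC [one + c - b]addrAC.
Qed.

Lemma cmb_le1 fs : (forall f, List.In f fs -> forall y, `|one - f y| <= 1) ->
  forall y, `|one - cmb fs y| <= 1.
Proof.
elim: fs => [|f fs IH] hf y; first by rewrite /= subr0 norm_one.
rewrite cmb_cons; apply: (le_trans (normM_le CA _ _)).
rewrite -[1](mulr1 1); apply: ler_pM => //.
  by apply: hf; left.
by apply: IH => g hg; apply: hf; right.
Qed.

Lemma cmb_theta fs (th : R[i]) y f0 : 0 <= th ->
  (forall f, List.In f fs -> forall y, `|one - f y| <= 1) ->
  List.In f0 fs -> `|one - f0 y| <= th -> `|one - cmb fs y| <= th.
Proof.
move=> th0; elim: fs => [|f fs IH] hf //= [ef|inf] h0.
  rewrite -/(cmb (f :: fs)) cmb_cons; apply: (le_trans (normM_le CA _ _)).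
  rewrite -[th]mulr1; apply: ler_pM => //; first by rewrite ef.
  by apply: cmb_le1 => g hg; apply: hf; right.
rewrite -/(cmb (f :: fs)) cmb_cons; apply: (le_trans (normM_le CA _ _)).
rewrite -[th]mul1r; apply: ler_pM => //; first by apply: hf; left.
by apply: IH => // g hg; apply: hf; right.
Qed.

Lemma cmb_pow (G : X -> A) (th : R[i]) : 0 <= th -> (forall y, `|one - G y| <= th) ->
  forall n y, `|one - cmb (nseq n G) y| <= th ^+ n.
Proof.
move=> th0 hG; elim=> [|n IH] y; first by rewrite /= subr0 expr0 norm_one.
rewrite -/(cmb (G :: nseq n G)) cmb_cons; apply: (le_trans (normM_le CA _ _)).
by rewrite exprS; apply: ler_pM.
Qed.
End Main.
Section Main2.
Context {R : realType} {A : completeNormedModType R[i]} {CA : unital_Cstar_algebra A}.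
Context (X : topologicalType).
Local Notation mul := (amul CA).
Local Notation one := (aone CA).
Local Notation st := (astar CA).

Lemma local_h (E : set (X -> A)) : star_subalgebra_CXA CA E -> compact [set: X] ->
  forall x f, E f -> invertible CA (f x) ->
  exists h, [/\ E h, (forall y, `|one - h y| <= 1) & `|one - h x| < 1].
Proof.
move=> HE cpt x f Ef [a' [aa' a'a]].
case: HE => Econt [E0 [Eadd [Escal [Emul Estar]]]].
pose k := fun y => mul (st (f y)) (f y).
have Ek : E k := Emul _ _ (Estar _ Ef) Ef.
have [M M0 hM] := bounded_fun _ _ cpt (Econt _ Ek).
have M10 : 0 < M + 1 by apply: ltr_wpDl M0 ltr01.
pose lam : R[i] := (M + 1)^-1.
have lam0 : 0 < lam by rewrite invr_gt0.
have lamr : lam^* = lam by apply: conj_Creal; apply: gtr0_real.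
pose s := fun y => lam *: k y.
have Es : E s := Escal _ _ Ek.
pose h := fun y => mul (s y) (s y).
have Eh : E h := Emul _ _ Es Es.
have ss : forall y, st (s y) = s y by move=> y; rewrite /s /k starZ lamr starM starK.
have s1 : forall y, `|s y| <= 1.
  move=> y; rewrite /s normrZ ger0_norm; last exact: ltW.
  have : lam * `|k y| <= lam * (M + 1).
    by apply: ler_wpM2l; [apply: ltW | apply: (le_trans (hM y)); rewrite lerDl].
  have lamM : lam * (M + 1) = 1 by rewrite /lam mulVf // gt_eqF.
  by rewrite lamM.
exists h; split => //.
  by move=> y; apply: A1; [apply: ss | apply: s1].
set a := f x.
pose b := lam^-1 *: mul a' (st a').
have sb1 : mul (s x) b = one.
  rewrite /s /b /k -/a mulZl mulZr scalerA mulfV ?gt_eqF // scale1r.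
  rewrite -Defs.mulA [mul a _]Defs.mulA aa' mul1x -starM a'a star1 //.
have bs1 : mul b (s x) = one.
  rewrite /s /b /k -/a mulZl mulZr scalerA mulVf ?gt_eqF // scale1r.
  rewrite -Defs.mulA [mul (st a') _]Defs.mulA -starM aa' star1 mul1x a'a //.
have c1 : 1 <= `|b| + 1 by rewrite lerDr.
have bb : `|b| <= `|b| + 1 by rewrite lerDl.
have H := A2 (s x) b (`|b| + 1) (ss x) (s1 x) sb1 bs1 bb c1.
apply: (le_lt_trans H).
rewrite gtrBl mulr_gt0 // invr_gt0; apply: lt_le_trans c1; exact: ltr01.
Qed.
End Main2.
Lemma In_mem (T : eqType) (x : T) (l : seq T) : x \in l -> List.In x l.
Proof.
elim: l => [|a l IH] //=; rewrite in_cons => /orP [/eqP ->|h]; [by left | by right; apply: IH].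
Qed.

Lemma sum_nat_ge (T : eqType) (l : seq T) (F : T -> nat) i :
  i \in l -> (F i <= \sum_(j <- l) F j)%N.
Proof.
elim: l => [|a l IH] //=.
rewrite in_cons big_cons => /orP [/eqP ->|il]; first by rewrite leq_addr.
by apply: (leq_trans (IH il)); rewrite leq_addl.
Qed.

Theorem lemma2p5 (R : realType) (X : topologicalType)
    (A : completeNormedModType R[i]) (CA : unital_Cstar_algebra A)
    (E : set (X -> A)) :
  compact [set: X] -> hausdorff_space X -> star_subalgebra_CXA CA E ->
  (uniform_closure E (fun _ => aone CA) <->
   (forall x : X, exists2 f, E f & invertible CA (f x))).
Proof.
move=> cpt _ HE; split.
  move=> hcl x; have [f Ef hf] := hcl 1 ltr01.
  by exists f => //; apply: neumann; apply: hf.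
move=> hinv e e0.
have HE' := HE.
case: HE' => Econt _.
have loc : forall x, exists h, [/\ E h, (forall y, `|aone CA - h y| <= 1) & `|aone CA - h x| < 1].
  move=> x; have [f Ef fi] := hinv x; exact: (local_h X E HE cpt x f Ef fi).
have [hh hhP] := choice loc.
pose U := fun i : (X * nat)%type =>
  hh i.1 @^-1` ball (aone CA) (1 - (i.2.+1%:R)^-1).
have oU : forall i, open (U i).
  move=> [x m]; have [Eh _ _] := hhP x.
  by move/continuousP: (Econt _ Eh); apply; exact: ball_open.
have cov : forall y, exists i, U i y.
  move=> y; have [_ _ hy] := hhP y.
  have d0 : 0 < 1 - `|aone CA - hh y y| by rewrite subr_gt0.
  have [m hm] := inv_small _ d0.
  exists (y, m); rewrite /U /= -ball_normE /ball_ /=.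
  by rewrite ltrBrDr addrC -ltrBrDr.
have [l hl] := cover_lemma _ _ _ cpt oU cov.
pose Ms := (\sum_(i <- l) i.2)%N.
pose th : R[i] := 1 - (Ms.+1%:R)^-1.
have th0 : 0 <= th by rewrite subr_ge0 invf_le1 ?ltr0n // ler1n.
have th1 : th < 1 by rewrite gtrBl invr_gt0 ltr0n.
pose fs := map (fun i : (X * nat)%type => hh i.1) l.
pose G := cmb (CA:=CA) X fs.
have Efs : forall f, List.In f fs -> E f.
  by move=> f /List.in_map_iff [i [<- _]]; have [] := hhP i.1.
have le1 : forall f, List.In f fs -> forall y, `|aone CA - f y| <= 1.
  by move=> f /List.in_map_iff [i [<- _]]; have [] := hhP i.1.
have EG : E G by apply: (cmb_in X E HE).
have Gth : forall y, `|aone CA - G y| <= th.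
  move=> y; have [i il hi] := hl y.
  apply: (cmb_theta X _ _ _ (hh i.1) th0 le1).
    by apply: List.in_map; apply: In_mem.
  move: hi; rewrite /U /= -ball_normE /ball_ /= => hi.
  apply: (le_trans (ltW hi)); apply: lerB => //.
  rewrite lef_pV2 ?posrE ?ltr0n // ler_nat ltnS.
  exact: sum_nat_ge.
have [n hn] := pow_small _ _ th0 th1 e0.
exists (cmb (CA:=CA) X (nseq n G)).
  apply: (cmb_in X E HE) => f.
  have hin : List.In f (nseq n G) -> f = G.
    by elim: (n) => [|k IH] //= [<-|/IH].
  by move=> /hin ->.
move=> y; apply: le_lt_trans hn.
exact: (cmb_pow X G th th0 Gth).
Qed.
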